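(* Let $|\!|\!|\cdot|\!|\!|$ be a norm on $X^n$, and $\mathbf{u}:=(\mathbf{u}_1,\ldots,\mathbf{u}_n)\in \mathbb{S}_X\times\ldots\times\mathbb{S}_X$ ($n$ copies of the unit sphere of $X$). Define $\psi_{\mathbf{u}}(t):=|\!|\!|(t_1\mathbf{u}_1,\ldots,t_{n}\mathbf{u}_n)|\!|\!|$ for all $t:=(t_1,\ldots,t_{n})\in\Omega_n$. (i) If $|\!|\!|\cdot|\!|\!|\in\mathbf{N}_{X^n}$, then $\psi_{\mathbf{u}}\in\mathbf{\Psi}_n$. (ii) If $|\!|\!|\cdot|\!|\!|\in\mathbf{N}^{\rm sc}_{X^n}$, then $\psi_{\mathbf{u}}\in\mathbf{\Psi}^{\rm sc}_{n}$.
   Context: Let $(X,\|\cdot\|)$ be a normed vector space, $n\ge2$. $\mathbf{N}_{X^n}$ is the family of norms $|\!|\!|\cdot|\!|\!|$ on $X^n$ satisfying (A1) $|\!|\!|(x_1,\ldots,x_n)|\!|\!|=|\!|\!|(\pm x_1,\ldots,\pm x_n)|\!|\!|$ for all $x\in X^n$ and all sign choices, and (A2) $|\!|\!|(0_X,\ldots,0_X,v,0_X,\ldots,0_X)|\!|\!|=\|v\|$ for all $v\in X$ in any $i$th position. $\mathbf{N}^{\rm sc}_{X^n}$ is the subclass of strictly convex norms in $\mathbf{N}_{X^n}$ (a norm is strictly convex if the norm of the sum of any two distinct unit vectors is $<2$). $\Omega_n:=\{t\in\mathbb{R}^n\mid t_i\ge0,\ \sum_i t_i=1\}$, $\Omega_n^\circ:=\{t\in\Omega_n\mid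 t_i<1\ \forall i\}$, $\mathbf{e}_i$ the standard unit vectors. $\mathbf{\Psi}_n$ is the class of convex continuous $\psi:\Omega_n\to\mathbb{R}$ with (B1) $\psi(\mathbf{e}_i)=1$ for all $i$ and (B2) $\psi(t)\ge(1-t_i)\psi\big(\frac{t_1}{1-t_i},\ldots,\frac{t_{i-1}}{1-t_i},0,\frac{t_{i+1}}{1-t_i},\ldots,\frac{t_n}{1-t_i}\big)$ for all $t\in\Omega_n^\circ$, $i=1,\ldots,n$; $\mathbf{\Psi}^{\rm sc}_n$ is its subclass of strictly convex functions. *)

(* Defs.v *)
From HB Require Import structures.
From mathcomp Require Import all_boot all_order all_algebra.
From mathcomp Require Import all_classical all_reals all_analysis.
Set Implicit Arguments. Unset Strict Implicit. Unset Printing Implicit Defensive.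
Import Order.TTheory GRing.Theory Num.Theory.
Import numFieldNormedType.Exports.
Local Open Scope classical_set_scope.
Local Open Scope ring_scope.

Section Defs.
Variables (R : realType) (X : normedModType R) (n : nat).

Definition is_norm (N : ('I_n -> X) -> R) : Prop :=
  [/\ forall x, N x = 0 -> x = (fun _ => 0),
      forall (a : R) x, N (fun i => a *: x i) = `|a| * N x &
      forall x y, N (fun i => x i + y i) <= N x + N y].

Definition strictly_convex_norm (N : ('I_n -> X) -> R) : Prop :=
  forall x y, N x = 1 -> N y = 1 -> x <> y -> N (fun i => x i + y i) < 2.

Definition in_NXn (N : ('I_n -> X) -> R) : Prop :=
  [/\ is_norm N,
      (forall (x : 'I_n -> X) (eps : 'I_n -> bool),
          N (fun i => (-1) ^+ eps i *: x i) = N x) &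
      (forall (i : 'I_n) (v : X), N (fun j => if j == i then v else 0) = `|v|)].

Definition in_NXn_sc (N : ('I_n -> X) -> R) : Prop :=
  in_NXn N /\ strictly_convex_norm N.

End Defs.

Section PsiDefs.
Variables (R : realType) (n : nat).

Definition Omega : set 'rV[R]_n :=
  [set t | (forall i, 0 <= t ord0 i) /\ \sum_(i < n) t ord0 i = 1].

Definition Omega_int : set 'rV[R]_n :=
  [set t | Omega t /\ forall i, t ord0 i < 1].

Definition e_vec (i : 'I_n) : 'rV[R]_n := \row_j (if j == i then 1 else 0).

Definition convex_on (psi : 'rV[R]_n -> R) : Prop :=
  forall s t (l : R), Omega s -> Omega t -> 0 <= l -> l <= 1 ->
    psi (l *: s + (1 - l) *: t) <= l * psi s + (1 - l) * psi t.

Definition strictly_convex_on (psi : 'rV[R]_n -> R) : Prop :=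
  forall s t (l : R), Omega s -> Omega t -> s <> t -> 0 < l -> l < 1 ->
    psi (l *: s + (1 - l) *: t) < l * psi s + (1 - l) * psi t.

Definition drop_coord (t : 'rV[R]_n) (i : 'I_n) : 'rV[R]_n :=
  \row_j (if j == i then 0 else t ord0 j / (1 - t ord0 i)).

Definition in_Psi (psi : 'rV[R]_n -> R) : Prop :=
  [/\ convex_on psi,
      {within Omega, continuous psi},
      (forall i, psi (e_vec i) = 1) &
      (forall t i, Omega_int t ->
          psi t >= (1 - t ord0 i) * psi (drop_coord t i))].

Definition in_Psi_sc (psi : 'rV[R]_n -> R) : Prop :=
  in_Psi psi /\ strictly_convex_on psi.

End PsiDefs.

Definition psi_u (R : realType) (X : normedModType R) (n : nat)
  (N : ('I_n -> X) -> R) (u : 'I_n -> X) : 'rV[R]_n -> R :=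
  fun t => N (fun i => t ord0 i *: u i).

(* Main.v *)
Require Import Defs.
From HB Require Import structures.
From mathcomp Require Import all_boot all_order all_algebra.
From mathcomp Require Import all_classical all_reals all_analysis.
From mathcomp Require Import ring lra.
Import Order.TTheory GRing.Theory Num.Theory.
Import numFieldNormedType.Exports.
Local Open Scope ring_scope.

Section Helpers.
Variables (R : realType) (X : normedModType R) (n : nat) (N : ('I_n -> X) -> R).
Hypothesis hN : is_norm N.

Lemma N0 : N (fun _ => 0) = 0.
Proof.
case: hN => _ hZ _; have := hZ 0 (fun _ => 0); rewrite normr0 mul0r.
by have -> : (fun i : 'I_n => 0 *: (0:X)) = (fun _ => 0) by apply: funext => i; rewrite scale0r.
Qed.

Lemma NZ a x : N (fun i => a *: x i) = `|a| * N x.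
Proof. by case: hN. Qed.

Lemma ND x y : N (fun i => x i + y i) <= N x + N y.
Proof. by case: hN. Qed.

Lemma Nge0 x : 0 <= N x.
Proof.
have := ND x (fun i => - x i).
have -> : (fun i => x i + - x i) = (fun _ => 0) by apply: funext => i; rewrite subrr.
have -> : (fun i => - x i) = (fun i => (-1) *: x i) by apply: funext => i; rewrite scaleN1r.
rewrite N0 NZ normrN normr1 mul1r => H; lra.
Qed.

Lemma Nsum (I : Type) (r : seq I) (f : I -> 'I_n -> X) :
  N (fun j => \sum_(i <- r) f i j) <= \sum_(i <- r) N (f i).
Proof.
elim: r => [|a r IH].
  have -> : (fun j => \sum_(i <- [::]) f i j) = (fun _ => 0).
    by apply: funext => j; rewrite big_nil.
  by rewrite N0 big_nil.
have -> : (fun j => \sum_(i <- a :: r) f i j) = (fun j => f a j + \sum_(i <- r) f i j).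
  by apply: funext => j; rewrite big_cons.
rewrite big_cons; apply: le_trans (ND _ _) _; exact: lerD.
Qed.

Lemma Nbound (A2 : forall i v, N (fun j => if j == i then v else 0) = `|v|) x :
  N x <= \sum_i `|x i|.
Proof.
pose f := fun (i j : 'I_n) => if j == i then x i else 0.
have -> : N x = N (fun j => \sum_(i <- index_enum 'I_n) f i j).
  congr (N _); apply: funext => j; rewrite (bigD1 j) //= /f eqxx big1 ?addr0 //.
  by move=> i /negbTE; rewrite eq_sym => ->.
apply: le_trans (Nsum _ _ f) _; rewrite le_eqVlt; apply/orP; left; apply/eqP.
by apply: eq_bigr => i _; exact: A2.
Qed.

Lemma Nmono (A1 : forall (x : 'I_n -> X) (eps : 'I_n -> bool),
          N (fun i => (-1) ^+ eps i *: x i) = N x) x i :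
  N (fun j => if j == i then 0 else x j) <= N x.
Proof.
pose y := fun j => x j + (-1) ^+ (j == i) *: x j.
have -> : N (fun j => if j == i then 0 else x j) = 2^-1 * N y.
  rewrite -(ger0_norm (_ : 0 <= 2^-1 :> R)) ?invr_ge0 ?ler0n // -NZ.
  congr (N _); apply: funext => j; rewrite /y.
  case: eqP => _; rewrite ?expr1 ?expr0 ?scaleN1r ?scale1r ?subrr ?scaler0 //.
  rewrite -{2 3}[x j]scale1r -scalerDl scalerA (_ : 2^-1 * (1+1) = 1 :> R) ?scale1r //; by field.
have := ND x (fun j => (-1) ^+ (j == i) *: x j).
rewrite (A1 x (fun j => j == i)) -/y => H.
have := Nge0 x; have := Nge0 y.
move=> h1 h2; lra.
Qed.

Lemma Nstrict (sc : strictly_convex_norm N) x y : 0 < N x -> 0 < N y ->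
  (fun i => (N x)^-1 *: x i) <> (fun i => (N y)^-1 *: y i) ->
  N (fun i => x i + y i) < N x + N y.
Proof.
wlog le_ab : x y / N x <= N y.
  move=> W hx hy hne; have [h|h] := lerP (N x) (N y); first exact: W.
  have -> : (fun i => x i + y i) = (fun i => y i + x i) by apply: funext => i; rewrite addrC.
  rewrite addrC; apply: W => //; first exact: ltW.
  by move=> e; apply: hne.
move=> hx hy hne.
set a := N x; set b := N y.
have Nx1 : N (fun i => a^-1 *: x i) = 1 by rewrite NZ ger0_norm ?invr_ge0 ?ltW // mulVf // gt_eqF.
have Ny1 : N (fun i => b^-1 *: y i) = 1 by rewrite NZ ger0_norm ?invr_ge0 ?ltW // mulVf // gt_eqF.
have H2 := sc _ _ Nx1 Ny1 hne.
have -> : (fun i => x i + y i) = (fun i => a *: ((fun i => a^-1 *: x i) i + (fun i => b^-1 *: y i) i) + (b - a) *: (fun i => b^-1 *: y i) i).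
  apply: funext => i /=; rewrite scalerDr !scalerA mulfV ?gt_eqF // scale1r -addrA; congr (_ + _).
  by rewrite -scalerDl -mulrDl addrC subrK mulfV ?gt_eqF // scale1r.
apply: le_lt_trans (ND _ _) _.
rewrite NZ (NZ (b - a)) Ny1 ger0_norm ?ltW // ger0_norm ?subr_ge0 //.
have := Nge0 (fun i => a^-1 *: x i + b^-1 *: y i) => h0.
have h3 : 0 < a * (2 - N (fun i => a^-1 *: x i + b^-1 *: y i)) by apply: mulr_gt0 => //; rewrite subr_gt0.
lra.
Qed.

End Helpers.

Arguments N0 {R X n N}.
Arguments NZ {R X n N}.
Arguments ND {R X n N}.
Arguments Nge0 {R X n N}.
Arguments Nbound {R X n N}.
Arguments Nmono {R X n N}.
Arguments Nstrict {R X n N}.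

Lemma entry_le (R : realType) (n : nat) (s : 'rV[R]_n) i : `|s ord0 i| <= `|s|.
Proof.
rewrite [leRHS]/Num.norm /= mx_normrE; apply/bigmax_geP; right => /=.
by exists (ord0, i).
Qed.

Lemma psi_diff (R : realType) (X : normedModType R) (n : nat)
  (N : ('I_n -> X) -> R) (hN : is_norm N)
  (A2 : forall i v, N (fun j => if j == i then v else 0) = `|v|)
  (u : 'I_n -> X) (hu : forall i, `|u i| = 1) s t :
  psi_u N u s <= psi_u N u t + `|s - t| *+ n.
Proof.
rewrite /psi_u.
have -> : N (fun i => s ord0 i *: u i) = N (fun i => (fun i => t ord0 i *: u i) i
    + (fun i => (s ord0 i - t ord0 i) *: u i) i).
  by congr (N _); apply: funext => i; rewrite -scalerDl addrC subrK.
apply: le_trans (ND hN _ _) _; rewrite lerD2l.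
apply: le_trans (Nbound hN A2 _) _.
rewrite -[n in _ *+ n]card_ord -sumr_const; apply: ler_sum => i _.
have -> : s ord0 i - t ord0 i = (s - t) ord0 i by rewrite !mxE.
by rewrite normrZ hu mulr1 entry_le.
Qed.

Lemma psi_cont (R : realType) (X : normedModType R) (n : nat)
  (N : ('I_n -> X) -> R) (hN : is_norm N)
  (A2 : forall i v, N (fun j => if j == i then v else 0) = `|v|)
  (u : 'I_n -> X) (hu : forall i, `|u i| = 1) :
  continuous (psi_u N u).
Proof.
move=> s; apply/(@cvgrPdist_lt _ _ _ _ (nbhs_filter s)) => e e0.
have hn1 : (0 : R) < n.+1%:R by rewrite ltr0n.
have d0 : 0 < e / n.+1%:R by rewrite divr_gt0.
near=> t.
have hst : `|s - t| < e / n.+1%:R.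
  by near: t; exact: (@cvgr_dist_lt _ _ _ _ (nbhs_filter s) id s cvg_id _ d0).
rewrite ltr_pdivlMr // in hst.
have h1 : `|s - t| * n%:R <= `|s - t| * n.+1%:R by rewrite ler_wpM2l // ler_nat.
have h2 := @psi_diff R X n N hN A2 u hu s t.
have h3 := @psi_diff R X n N hN A2 u hu t s.
rewrite (distrC t s) -mulr_natr in h3; rewrite -mulr_natr in h2.
rewrite ltr_distlC; apply/andP; split; lra.
Unshelve. all: end_near.
Qed.

Theorem theorem2p9 (R : realType) (X : normedModType R) (n : nat)
  (hn : (2 <= n)%N) (N : ('I_n -> X) -> R) (hN : is_norm N)
  (u : 'I_n -> X) (hu : forall i, `|u i| = 1) :
  (in_NXn N -> in_Psi (psi_u N u)) /\
  (in_NXn_sc N -> in_Psi_sc (psi_u N u)).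
Proof.
have split_sum : forall (s t : 'rV[R]_n) (l : R), N (fun i => (l *: s + (1 - l) *: t) ord0 i *: u i)
   = N (fun i => (fun i => l *: (s ord0 i *: u i)) i + (fun i => (1 - l) *: (t ord0 i *: u i)) i).
  by move=> s t l; congr (N _); apply: funext => i; rewrite !mxE !scalerA -scalerDl.
have partI : in_NXn N -> in_Psi (psi_u N u).
  case=> _ A1 A2; split.
  - move=> s t l _ _ l0 l1; rewrite /psi_u split_sum.
    apply: le_trans (ND hN _ _) _.
    rewrite (NZ hN l (fun i => s ord0 i *: u i)) (NZ hN (1 - l) (fun i => t ord0 i *: u i)).
    by rewrite ger0_norm // ger0_norm ?subr_ge0.
  - by apply: continuous_subspaceT; exact: (@psi_cont _ _ _ _ hN A2 _ hu).
  - move=> i; rewrite /psi_u -(hu i) -(A2 i (u i)); congr (N _); apply: funext => j.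
    by rewrite mxE; case: eqP => [->|_]; rewrite ?scale1r ?scale0r.
  - move=> t i [[t0 t1] tlt].
    have hti : 0 < 1 - t ord0 i by rewrite subr_gt0.
    rewrite /psi_u -{1}(ger0_norm (ltW hti)) -NZ //.
    have -> : (fun j => (1 - t ord0 i) *: (drop_coord t i ord0 j *: u j))
       = (fun j => if j == i then 0 else t ord0 j *: u j).
      apply: funext => j; rewrite mxE; case: eqP => _; first by rewrite scale0r scaler0.
      by rewrite scalerA mulrC divfK ?gt_eqF.
    exact: (Nmono hN A1 (fun j => t ord0 j *: u j) i).
split => //.
case=> hX sc; split; first exact: partI hX.
have hN0 : forall x, N x = 0 -> x = (fun _ => 0) by case: hN.
have pos : forall s, Omega s -> 0 < psi_u N u s.
  move=> s [s0 s1]; rewrite lt_def Nge0 // andbT; apply/eqP => e.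
  have z : forall j, s ord0 j = 0.
    move=> j; have := congr1 (fun f => f j) (hN0 _ e) => /= /(congr1 (fun v => `|v|)).
    by rewrite normrZ hu mulr1 normr0 => /normr0_eq0.
  by move: s1; rewrite big1 // => /eqP; rewrite eq_sym oner_eq0.
move=> s t l hs ht hst l0 l1; rewrite /psi_u split_sum.
have ps := pos s hs; have pt := pos t ht.
have Nx : N (fun i => l *: (s ord0 i *: u i)) = l * psi_u N u s.
  by rewrite (NZ hN l (fun i => s ord0 i *: u i)) ger0_norm // ltW.
have Ny : N (fun i => (1 - l) *: (t ord0 i *: u i)) = (1 - l) * psi_u N u t.
  by rewrite (NZ hN (1 - l) (fun i => t ord0 i *: u i)) ger0_norm // subr_ge0 ltW.
have l1' : 0 < 1 - l by rewrite subr_gt0.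
rewrite -Nx -Ny; apply: (Nstrict hN sc); rewrite ?Nx ?Ny ?mulr_gt0 //.
move=> E; apply: hst.
set A := psi_u N u s in ps Nx E *; set B := psi_u N u t in pt Ny E *.
have E' : forall j, s ord0 j = A / B * t ord0 j.
  move=> j; have := congr1 (fun f => f j) E => /=; rewrite !scalerA => /eqP.
  rewrite -subr_eq0 -scalerBl => /eqP /(congr1 (fun v => `|v|)).
  rewrite normrZ hu mulr1 normr0 => /normr0_eq0 /eqP; rewrite subr_eq0 => /eqP Ej.
  have -> : s ord0 j = (l * A) * ((l * A)^-1 * (l * s ord0 j)) / l.
    by field; rewrite ?gt_eqF.
  rewrite Ej; field; rewrite ?gt_eqF //.
have AB : A / B = 1.
  case: hs => _ <-; case: ht => _ s1.
  by rewrite (eq_bigr _ (fun j _ => E' j)) -mulr_sumr s1 mulr1.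
by apply/rowP => j; rewrite E' AB mul1r.
Qed.
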